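(* Let $q\geq4$ be an even integer, $n=q^2-1$, and let $A_0=I,A_1,A_2,A_3$ be the adjacency matrices of a symmetric 3-class association scheme on $n$ points with first eigenmatrix \[ P=\begin{bmatrix}1&\frac{q^2}{2}-q&\frac{q^2}{2}&q-2\\ 1&\frac q2&-\frac q2&-1\\ 1&-\frac q2+1&-\frac q2&q-2\\ 1&-\frac q2&\frac q2&-1\end{bmatrix}. \] Let $w_3$ be a complex number with $w_3+\frac1{w_3}+q^2-3=0$. (a) If $W=A_0+w_3(A_1+A_2+A_3)$, then $W$ and $W^{(-)}$ are inequivalent. (b) If $W=A_0+w_1A_1+w_1A_2+w_3A_3$ with $w_1=\frac{-(q-3)w_3+(q-1)}{q^2-2q-1}$, then $W$ and $W^{(-)}$ are inequivalent.
   Context: A symmetric association scheme with adjacency matrices $A_0=I,\dots,A_d$: symmetric $(0,1)$-matrices summing to $J$ whose span is closed under multiplication; with primitive idempotents $E_0=\frac1nJ,\dots,E_d$, the first eigenmatrix is defined by $A_j=\sum_iP_{i,j}E_i$. The matrices $W$ in (a) and (b) are type-II matrices, i.e. have nonzero complex entries and satisfy $W(W^{(-)})^\top=nI$, where $W^{(-)}$ is the entrywise inverse of $W$. Two type-II matrices $W_1,W_2$ are equivalent if there exist invertible diagonal matrices $D,D'$ and permutation matrices $T,T'$ with $DW_1D'=TW_2T'$. *)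

(* Defs.v *)
From HB Require Import structures.
From mathcomp Require Import all_boot all_order all_algebra all_fingroup all_field.
Set Implicit Arguments. Unset Strict Implicit. Unset Printing Implicit Defensive.
Import Order.TTheory GRing.Theory Num.Theory.
Local Open Scope ring_scope.

Definition sym_assoc_scheme (n d : nat) (A : 'I_d.+1 -> 'M[algC]_n) : Prop :=
  A ord0 = 1%:M /\
      (forall i, A i != 0) /\
      (forall i, (A i)^T = A i) /\
      (forall i x y, A i x y = 0 \/ A i x y = 1) /\
      \sum_i A i = const_mx 1 /\
      (forall i j, exists c : 'I_d.+1 -> algC, A i *m A j = \sum_k c k *: A k).

Definition first_eigenmatrix (n d : nat) (A : 'I_d.+1 -> 'M[algC]_n)
    (P : 'M[algC]_d.+1) : Prop :=
  exists E : 'I_d.+1 -> 'M[algC]_n,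
    E ord0 = (n%:R)^-1 *: const_mx 1 /\
        (forall i, E i != 0) /\
        (forall i j, E i *m E j = if i == j then E i else 0) /\
        \sum_i E i = 1%:M /\
        (forall i, exists c : 'I_d.+1 -> algC, E i = \sum_k c k *: A k) /\
        (forall j, A j = \sum_i P i j *: E i).

Definition entry_inv (n : nat) (W : 'M[algC]_n) : 'M[algC]_n :=
  map_mx (fun x => x^-1) W.

Definition typeII_equiv (n : nat) (W1 W2 : 'M[algC]_n) : Prop :=
  exists (dl dr : 'rV[algC]_n) (s t : 'S_n),
    (forall i, dl 0 i != 0) /\ (forall i, dr 0 i != 0) /\
    diag_mx dl *m W1 *m diag_mx dr = perm_mx s *m W2 *m perm_mx t.

Definition Pq (q : nat) : 'M[algC]_4 :=
  let Q : algC := q%:R in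
  let rows : seq (seq algC) :=
    [:: [:: 1; Q ^+ 2 / 2 - Q; Q ^+ 2 / 2; Q - 2];
        [:: 1; Q / 2; - (Q / 2); -1];
        [:: 1; - (Q / 2) + 1; - (Q / 2); Q - 2];
        [:: 1; - (Q / 2); Q / 2; -1]] in
  \matrix_(i < 4, j < 4) nth 0 (nth [::] rows i) j.

(* Main.v *)
Require Import Defs.
From HB Require Import structures.
From mathcomp Require Import all_boot all_order all_algebra all_fingroup all_field.
From mathcomp Require Import ring lra zify.
Set Implicit Arguments. Unset Strict Implicit. Unset Printing Implicit Defensive.
Import Order.TTheory GRing.Theory Num.Theory.
Local Open Scope ring_scope.
Lemma real_part (R : realFieldType) (q t : R) : 4 <= q ->
  t ^+ 2 + (q ^+ 2 - 3) * t + 1 = 0 ->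
  let w := (- ((q - 3) * t) + (q - 1)) / (q ^+ 2 - 2 * q - 1) in
  (-1 < t /\ t < 0 /\ -t <= w /\ w < 1) \/ (t < -1 /\ 1 < w /\ w <= -t).
Proof.
move=> hq ht w.
have hD : 0 < q ^+ 2 - 2 * q - 1 by nra.
have tneg : t < 0 by nra.
have tn1 : t != -1.
  apply/eqP=> e; move: ht; rewrite e; nra.
have hw : w * (q ^+ 2 - 2 * q - 1) = - ((q - 3) * t) + (q - 1).
  by rewrite /w mulfVK // gt_eqF.
case: (ltrgtP t (-1)) => h; last by rewrite h eqxx in tn1.
- right; split => //; split.
  + have : 1 * (q ^+ 2 - 2 * q - 1) < w * (q ^+ 2 - 2 * q - 1).
      rewrite hw; nra.
    by rewrite ltr_pM2r.
  + have : w * (q ^+ 2 - 2 * q - 1) <= - t * (q ^+ 2 - 2 * q - 1).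
      rewrite hw; nra.
    by rewrite ler_pM2r.
- left; split => //; split => //; split.
  + have : - t * (q ^+ 2 - 2 * q - 1) <= w * (q ^+ 2 - 2 * q - 1).
      rewrite hw; nra.
    by rewrite ler_pM2r.
  + have : w * (q ^+ 2 - 2 * q - 1) < 1 * (q ^+ 2 - 2 * q - 1).
      rewrite hw; nra.
    by rewrite ltr_pM2r.
Qed.
Lemma core n (W : 'M[algC]_n) (w : algC) (a b c : 'I_n) :
 b != c -> (forall (x : 'I_n), W x x = 1) -> W a b = w -> W b a = w -> W a c = w -> W c a = w ->
 (forall (x x' y y' : 'I_n), W x y * W x' y' = w ^+ 2 * (W x y' * W x' y) -> x = y') ->
 (forall (x y : 'I_n), W x y != 0) ->
 ~ typeII_equiv W (entry_inv W).
Proof.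
move=> bc hd hab hba hac hca H nz [dl [dr [s [t [hdl [hdr heq]]]]]].
have E i j : dl 0 i * W i j * dr 0 j = (W (s i) ((t^-1)%g j))^-1.
  have := congr1 (fun M : 'M[algC]_n => M i j) heq => /=.
  rewrite -row_permE -[t]invgK -col_permE mul_mx_diag mul_diag_mx.
  idtac.
  by rewrite !mxE !invgK.
pose u := (t^-1)%g.
have key x x' y y' : W x y * W x' y' * ((W (s x) (u y'))^-1 * (W (s x') (u y))^-1)
   = W x y' * W x' y * ((W (s x) (u y))^-1 * (W (s x') (u y'))^-1).
  rewrite -!E; ring.
have wnz : w != 0 by rewrite -hab.
have step d : W a d = w -> W d a = w -> (s^-1)%g a = (u^-1)%g d.
  move=> had hda; apply: (H _ ((s^-1)%g d) ((u^-1)%g a)).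
  have := key ((s^-1)%g a) ((s^-1)%g d) ((u^-1)%g a) ((u^-1)%g d).
  rewrite !permKV hd hd had hda !invr1 !mulr1 => e.
  rewrite -e; field.
  by rewrite wnz.
have := step b hab hba; rewrite (step c hac hca) => /perm_inj e.
by rewrite e eqxx in bc.
Qed.
Definition nR (x : algC) : algR := in_algR (normr_real x).

Lemma nR_le x y : (nR x <= nR y) = (`|x| <= `|y|). Proof. by []. Qed.
Lemma nR_lt x y : (nR x < nR y) = (`|x| < `|y|). Proof. by []. Qed.
Lemma nR1 : nR 1 = 1. Proof. by apply: val_inj; rewrite /= normr1. Qed.
Lemma nRM x y : nR (x * y) = nR x * nR y. Proof. by apply: val_inj; rewrite /= normrM. Qed.
Lemma nR_ge0 x : 0 <= nR x. Proof. exact: normr_ge0. Qed.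
Lemma nR1le x : (1 <= nR x) = (1 <= `|x|). Proof. by []. Qed.
Lemma nR1lt x : (1 < nR x) = (1 < `|x|). Proof. by []. Qed.
Lemma nRlt1 x : (nR x < 1) = (`|x| < 1). Proof. by []. Qed.
Lemma nRle1 x : (nR x <= 1) = (`|x| <= 1). Proof. by []. Qed.
Lemma nRgt0 x : (0 < nR x) = (0 < `|x|). Proof. by []. Qed.

Lemma normH n (W : 'M[algC]_n) (w : algC) :
 (forall x, W x x = 1) -> 0 < `|w| ->
 ((`|w| < 1 /\ forall x y, x != y -> `|w| <= `|W x y| /\ `|W x y| < 1) \/
  (1 < `|w| /\ forall x y, x != y -> 1 < `|W x y| /\ `|W x y| <= `|w|)) ->
 forall x x' y y', W x y * W x' y' = w ^+ 2 * (W x y' * W x' y) -> x = y'.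
Proof.
move=> hd w0 hc x x' y y' e.
apply/eqP; apply: contraT => nxy; suff : False by [].
have E : nR (W x y) * nR (W x' y') = nR w ^+ 2 * (nR (W x y') * nR (W x' y)).
  by apply: val_inj => /=; rewrite -!normrM e expr2 !normrM.
have w0' : 0 < nR w by [].
have g u v := nR_ge0 (W u v).
case: hc => [[w1 hb]|[w1 hb]].
- have lo u v : nR w <= nR (W u v) /\ nR (W u v) <= 1.
    case: (eqVneq u v) => [->|uv]; first by rewrite hd nR1; split=> //; exact: ltW.
    by case: (hb u v uv) => h1 h2; split => //; exact: ltW.
  have [l1 _] := lo x y; have [l2 _] := lo x' y'; have [_ l3] := lo x' y.
  have [_ l4] := hb x y' nxy; rewrite -nRlt1 in l4.
  have h1 : nR w * nR w <= nR (W x y) * nR (W x' y') by apply: ler_pM => //; exact: ltW.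
  have h2 : nR (W x y') * nR (W x' y) < 1.
    have := g x y'; have := g x' y; nra.
  have h3 : 0 < nR w * nR w by nra.
  rewrite expr2 in E.
  have : nR w * nR w < nR w * nR w by nra.
  by rewrite ltxx.
- have lo u v : 1 <= nR (W u v) /\ nR (W u v) <= nR w.
    case: (eqVneq u v) => [->|uv]; first by rewrite hd nR1; split=> //; exact: ltW.
    by case: (hb u v uv) => h1 h2; split => //; exact: ltW.
  have [_ l1] := lo x y; have [_ l2] := lo x' y'; have [l3 _] := lo x' y.
  have [l4 _] := hb x y' nxy; rewrite -nR1lt in l4.
  have h1 : nR (W x y) * nR (W x' y') <= nR w * nR w.
    apply: ler_pM => //; exact: g.
  have h2 : 1 < nR (W x y') * nR (W x' y) by nra.
  have h3 : 0 < nR w * nR w by nra.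
  rewrite expr2 in E.
  have : nR w * nR w < nR w * nR w by nra.
  by rewrite ltxx.
Qed.
Lemma w3real (q : nat) (w3 : algC) : (4 <= q)%N ->
  w3 ^+ 2 + (q%:R ^+ 2 - 3) * w3 + 1 = 0 -> w3 \is Num.real.
Proof.
move=> hq e.
rewrite CrealE; apply: contraT => ne.
have e' : w3^* ^+ 2 + (q%:R ^+ 2 - 3) * w3^* + 1 = 0.
  have -> : w3^* ^+ 2 + (q%:R ^+ 2 - 3) * w3^* + 1 = (w3 ^+ 2 + (q%:R ^+ 2 - 3) * w3 + 1)^*.
    by rewrite !(rmorphD, rmorphM, rmorphB, rmorphN, rmorphXn, rmorph_nat, rmorph1) !expr2.
  by rewrite e conjC0.
have hs : w3 + w3^* = - (q%:R ^+ 2 - 3).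
  have : (w3 - w3^*) * (w3 + w3^* + (q%:R ^+ 2 - 3)) = 0.
    rewrite -[RHS](subrr 0) -{1}e -e'; ring.
  move/eqP; rewrite mulf_eq0 subr_eq0 eq_sym (negPf ne) /= => /eqP h.
  by rewrite -(addrK (q%:R ^+ 2 - 3) (w3 + w3^*)) h sub0r.
have hp : w3 * w3^* = 1.
  have : w3 ^+ 2 - (w3 + w3^*) * w3 + 1 = 0 by rewrite hs mulNr opprK.
  by move=> h; rewrite -[w3 * w3^*]addr0 -h; ring.
have n1 : `|w3| = 1.
  have : `|w3| ^+ 2 = 1 by rewrite normCK hp.
  move/eqP; rewrite sqrf_eq1 => /orP [/eqP //|/eqP h].
  by have := normr_ge0 w3; rewrite h oppr_ge0 ler10.
have : `|w3 + w3^*| <= 2.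
  by apply: le_trans (ler_normD _ _) _; rewrite norm_conjC n1.
rewrite hs normrN.
have h3 : (3 <= q ^ 2)%N by nia.
rewrite -natrX -(natrB _ h3) normr_nat ler_nat.
move=> h; suff: False by []; nia.
Qed.

Definition w1f (q : nat) (w3 : algC) : algC :=
  (- ((q%:R - 3) * w3) + (q%:R - 1)) / ((q%:R) ^+ 2 - 2 * q%:R - 1).

Lemma w3facts (q : nat) (w3 : algC) : (4 <= q)%N ->
  w3 + w3^-1 + (q%:R) ^+ 2 - 3 = 0 ->
  w3 != 0 /\ ((`|w3| < 1 /\ `|w3| <= `|w1f q w3| /\ `|w1f q w3| < 1) \/
   (1 < `|w3| /\ 1 < `|w1f q w3| /\ `|w1f q w3| <= `|w3|)).
Proof.
move=> hq hw3.
have w0 : w3 != 0.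
  apply/eqP => z; move: hw3; rewrite z invr0 !add0r -natrX.
  move/eqP; rewrite subr_eq0 -[3]/(3%:R) eqr_nat => /eqP h; nia.
split => //.
have e : w3 ^+ 2 + (q%:R ^+ 2 - 3) * w3 + 1 = 0.
  by rewrite -[RHS](mulr0 w3) -hw3; field.
have hr := w3real hq e.
pose t : algR := in_algR hr.
have ht : t ^+ 2 + ((q%:R : algR) ^+ 2 - 3) * t + 1 = 0.
  apply: val_inj; rewrite !(rmorphD, rmorphM, rmorphB, rmorphXn, rmorph_nat, rmorph1, rmorph0) /=.
  exact: e.
have hq' : (4 : algR) <= q%:R by rewrite -[4]/(4%:R) ler_nat.
pose w : algR := (- (((q%:R : algR) - 3) * t) + ((q%:R : algR) - 1)) / ((q%:R : algR) ^+ 2 - 2 * q%:R - 1).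
move: (real_part hq' ht) => /= H; rewrite -/w in H.
have hw : algRval w = w1f q w3.
  rewrite /w /w1f !(fmorphV, rmorphD, rmorphM, rmorphB, rmorphN, rmorphXn, rmorph_nat, rmorph1) /=.
  done.
have ltR (x y : algR) : (x < y) = (algRval x < algRval y) by [].
have leR (x y : algR) : (x <= y) = (algRval x <= algRval y) by [].
have vt : algRval t = w3 by [].
have v0 : algRval 0 = 0 := rmorph0 _.
have v1 : algRval 1 = 1 := rmorph1 _.
have vN x : algRval (- x) = - algRval x := rmorphN _ _.
case: H => [[h1 [h2 [h3 h4]]]|[h1 [h2 h3]]].
- left.
  have a1 : -t < 1 by lra.
  have a2 : 0 < w by lra.
  move: h2 a1 h3 h4 a2; rewrite !ltR !leR vN v0 v1 hw vt => h2 a1 h3 h4 a2.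
  by rewrite ltr0_norm // gtr0_norm.
- right.
  have a1 : 1 < -t by lra.
  have a2 : 0 < w by lra.
  have a3 : t < 0 by lra.
  move: a3 a1 h3 h2 a2; rewrite !ltR !leR vN v0 v1 hw vt => a3 a1 h3 h2 a2.
  by rewrite ltr0_norm // gtr0_norm.
Qed.

Lemma final n (W : 'M[algC]_n) (w : algC) (a b c : 'I_n) :
 b != c -> (forall x, W x x = 1) -> W a b = w -> W b a = w -> W a c = w -> W c a = w ->
 0 < `|w| ->
 ((`|w| < 1 /\ forall x y, x != y -> `|w| <= `|W x y| /\ `|W x y| < 1) \/
  (1 < `|w| /\ forall x y, x != y -> 1 < `|W x y| /\ `|W x y| <= `|w|)) ->
 ~ typeII_equiv W (entry_inv W).
Proof.
move=> bc hd hab hba hac hca w0 hc.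
apply: (core bc hd hab hba hac hca); first exact: normH.
move=> x y; case: (eqVneq x y) => [->|xy]; first by rewrite hd oner_eq0.
rewrite -normr_gt0; case: hc => [[_ hb]|[_ hb]]; have [h1 h2] := hb x y xy.
- exact: lt_le_trans h1.
- exact: lt_trans ltr01 h1.
Qed.

Lemma sum4 (f : 'I_4 -> algC) :
  \sum_i f i = f (inord 0) + f (inord 1) + f (inord 2) + f (inord 3).
Proof.
rewrite big_ord_recr big_ord_recr big_ord_recr big_ord_recr big_ord0 /= add0r.
by congr (f _ + f _ + f _ + f _); apply: val_inj; rewrite /= inordK.
Qed.

Unset Implicit Arguments.

Theorem proposition5p8 (q : nat) (hq4 : (4 <= q)%N) (hqeven : ~~ odd q)
  (A : 'I_4 -> 'M[algC]_(q ^ 2 - 1))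
  (hA : sym_assoc_scheme A) (hP : first_eigenmatrix A (Pq q))
  (w3 : algC) (hw3 : w3 + w3^-1 + (q%:R) ^+ 2 - 3 = 0) :
  (let W := A (inord 0) + w3 *: (A (inord 1) + A (inord 2) + A (inord 3)) in
   ~ typeII_equiv W (entry_inv W)) /\
  (let w1 := (- ((q%:R - 3) * w3) + (q%:R - 1)) / ((q%:R) ^+ 2 - 2 * q%:R - 1) in
   let W := A (inord 0) + w1 *: A (inord 1) + w1 *: A (inord 2) + w3 *: A (inord 3) in
   ~ typeII_equiv W (entry_inv W)).
Proof.
case: hA => [hA0 [_ [hAsym [hA01 [hAsum _]]]]].
case: hP => [E [hE0 [_ [hEorth [_ [_ hAP]]]]]].
set n := (q ^ 2 - 1)%N in A hA0 hAsym hA01 hAsum E hE0 hEorth hAP *.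
have hn : (15 <= n)%N by rewrite /n; nia.
have i0 : (inord 0 : 'I_4) = ord0 by apply: val_inj; rewrite /= inordK.
have A0E x y : A (inord 0) x y = (x == y)%:R by rewrite i0 hA0 mxE.
have S x y : A (inord 0) x y + A (inord 1) x y + A (inord 2) x y + A (inord 3) x y = 1.
  have := congr1 (fun M : 'M[algC]_n => M x y) hAsum => /=.
  by rewrite summxE sum4 mxE.
have S' x y : A (inord 1) x y + A (inord 2) x y + A (inord 3) x y = 1 - (x == y)%:R.
  by rewrite -[X in X - _](S x y) A0E; ring.
have ge0 k x y : 0 <= A k x y by case: (hA01 k x y) => ->; rewrite ?ler01.
have [w30 hb] := w3facts hq4 hw3.
have w3pos : 0 < `|w3| by rewrite normr_gt0.
pose a0 : 'I_n := Ordinal (leq_trans (isT : (2 < 15)%N) hn).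
pose b0 : 'I_n := Ordinal (leq_trans (isT : (1 < 15)%N) hn).
pose c0 : 'I_n := Ordinal (leq_trans (isT : (0 < 15)%N) hn).
split.
- move=> W.
  have WE x y : W x y = if x == y then 1 else w3.
    rewrite /W !mxE S' A0E; case: eqP => _ /=; ring.
  have hd x : W x x = 1 by rewrite WE eqxx.
  have hoff x y : x != y -> W x y = w3 by rewrite WE => /negPf ->.
  apply: (@final _ W w3 a0 b0 c0 _ hd) => //; try exact: hoff.
  case: hb => [[h1 _]|[h1 _]]; [left|right]; split => // x y xy; rewrite hoff //.
move=> w1 W.
have w1E : w1 = w1f q w3 by [].
have d3 x : A (inord 3) x x = 0.
  have := S' x x; rewrite eqxx subrr => h.
  by apply/eqP; rewrite eq_le ge0 andbT -h lerDr addr_ge0.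
have WE x y : W x y = if x == y then 1 else if A (inord 3) x y == 1 then w3 else w1.
  have e : W x y = (x == y)%:R + w1 * (1 - (x == y)%:R - A (inord 3) x y) + w3 * A (inord 3) x y.
    rewrite /W !mxE A0E -(S' x y); ring.
  rewrite e; case: eqP => [->|_]; first by rewrite d3 /=; ring.
  by case: (hA01 (inord 3) x y) => ->; rewrite ?eqxx ?(eq_sym 0) ?oner_eq0 /=; ring.
have hd x : W x x = 1 by rewrite WE eqxx.
have key : A (inord 3) *m E ord0 = Pq q ord0 (inord 3) *: E ord0.
  rewrite hAP mulmx_suml (bigD1 ord0) //= big1 ?addr0; first by rewrite -scalemxAl hEorth eqxx.
  by move=> i /negPf ne; rewrite -scalemxAl hEorth ne scaler0.
have hP03 : Pq q ord0 (inord 3) = q%:R - 2 by rewrite /Pq mxE inordK.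
have hsum : \sum_j A (inord 3) a0 j = q%:R - 2.
  have := congr1 (fun M : 'M[algC]_n => M a0 a0) key => /=.
  rewrite hE0 -scalemxAr !mxE inordK //= => h.
  have nn : (n%:R : algC)^-1 != 0 by rewrite invr_eq0 pnatr_eq0 -lt0n (leq_trans _ hn).
  move: h; rewrite mulr1 [RHS]mulrC => /(mulfI nn) <-.
  by apply: eq_bigr => j _; rewrite !mxE mulr1.
have cnt : (#|[set j | A (inord 3) a0 j == 1%R]| = q - 2)%N.
  apply/eqP; rewrite -(eqr_nat algC) natrB ?(leq_trans _ hq4) // -hsum.
  rewrite -sum1dep_card natr_sum big_mkcond /=; apply/eqP/eq_bigr => j _.
  by case: (hA01 (inord 3) a0 j) => ->; rewrite ?eqxx ?(eq_sym 0) ?oner_eq0.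
have : (1 < #|[set j | A (inord 3) a0 j == 1%R]|)%N by rewrite cnt; lia.
case/card_gt1P => b [c [hb' hc' bc]].
rewrite !inE in hb' hc'.
have off x y : x != y -> A (inord 3) x y == 1 -> W x y = w3.
  by rewrite WE => /negPf -> ->.
have sym x y : A (inord 3) y x = A (inord 3) x y by rewrite -{1}(hAsym (inord 3)) mxE.
have nab d : A (inord 3) a0 d == 1 -> a0 != d.
  by move=> h; apply/eqP => e; move: h; rewrite -e d3 eq_sym oner_eq0.
have WE' x y : x != y -> W x y = w3 \/ W x y = w1f q w3.
  by move=> xy; rewrite WE (negPf xy); case: ifP => _; [left|right].
apply: (@final _ W w3 a0 b c bc hd).
- exact: off (nab _ hb') hb'.
- by apply: off; [rewrite eq_sym nab | rewrite sym].
- exact: off (nab _ hc') hc'.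
- by apply: off; [rewrite eq_sym nab | rewrite sym].
- exact: w3pos.
- case: hb => [[h1 [h2 h3]]|[h1 [h2 h3]]]; [left|right]; split => // x y xy;
  by case: (WE' x y xy) => ->; rewrite ?lexx.
Qed.
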